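(* Let $a,c,d,\gamma\in\mathbb{R}$ with $a>-1$, $a-\gamma c\ge -1$ and $\gamma>0$. If $n$ is an integer with $n\ge 1+\gamma^{-1}$, then $$\Big\lfloor \frac{\lceil a+c+nd\rceil}{n}\Big\rfloor\le \lceil a+d\rceil.$$ *)

(* Defs.v *)
From mathcomp Require Import all_boot all_order all_algebra.
Set Implicit Arguments. Unset Strict Implicit. Unset Printing Implicit Defensive.

(* Main.v *)
Require Import Defs.
From mathcomp Require Import all_boot all_order all_algebra.
From mathcomp Require Import zify ring lra.
Import Order.TTheory GRing.Theory Num.Theory.
Local Open Scope ring_scope.

Theorem lemma1p3 (R : archiRealFieldType) (a c d g : R) (n : int)
  (ha : -1 < a) (hac : -1 <= a - g * c) (hg : 0 < g)
  (hn : 1 + g^-1 <= n%:~R) :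
  Num.floor ((Num.ceil (a + c + n%:~R * d))%:~R / n%:~R : R)
    <= Num.ceil (a + d).
Proof.
set N : R := n%:~R in hn *.
set k := Num.ceil (a + d).
have hgi : 0 < g^-1 by rewrite invr_gt0.
have hggi : g * g^-1 = 1 by rewrite mulfV // gt_eqF.
have hN : 1 < N by lra.
have hc : c <= (a + 1) * (N - 1).
  have h1 : 0 <= (a + 1) * (N - 1 - g^-1) by apply: mulr_ge0; lra.
  have h2 : 0 <= g^-1 * (a + 1 - g * c) by apply: mulr_ge0; lra.
  have h3 : c * (g * g^-1) = c by rewrite hggi mulr1.
  nra.
have hk : a + d <= k%:~R by rewrite /k; case/andP: (ceil_itv (a + d)).
have hm : Num.ceil (a + c + N * d) <= n * (k + 1) - 1.
  rewrite ceil_le_int intrB intrM intrD /=.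
  rewrite -/N.
  have : N * (a + d) <= N * k%:~R by rewrite ler_pM2l; lra.
  nra.
set m := Num.ceil (a + c + N * d) in hm *.
have hmR : m%:~R <= N * (k + 1)%:~R - 1.
  have := hm; rewrite -(ler_int R) intrB intrM /= -/N; done.
have : Num.floor (m%:~R / N) < k + 1.
  rewrite floor_lt_int ltr_pdivrMr; last lra.
  lra.
lia.
Qed.
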